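(* Let $r\geq1$ be an integer. For $\boldsymbol\nu\in\mathbf N^r$ let $F_{\boldsymbol\nu}(\rho,\boldsymbol T)=\sum_{\boldsymbol n\in\mathbf N^r}\rho^{\min_i(n_i+\nu_i)}\prod_iT_i^{n_i}\in\mathbf Z[[\rho,T_1,\dots,T_r]]$ and $\widetilde F_{\boldsymbol\nu}(\rho,\boldsymbol T)=(1-\rho\prod_iT_i)\prod_i(1-T_i)\,F_{\boldsymbol\nu}(\rho,\boldsymbol T)$. Then: (1) Let $\boldsymbol n\in\mathbf N^r$, $m=\min_i(n_i+\nu_i)$, $I_1=\{i:n_i\geq1\}$, $I_2=\{i:n_i\geq2\}$, $K=\{i\in I_1:n_i+\nu_i\geq m+1\}$. If $I_1\neq\{1,\dots,r\}$, the coefficient of $\prod T_i^{n_i}$ in $\widetilde F_{\boldsymbol\nu}$ equals $\rho^m$ if $I_1=\varnothing$; $\rho^m-\rho^{m-1}$ if $I_1\neq\varnothing$ and $K=\varnothing$; $0$ if $K\neq\varnothing$. If $I_1=\{1,\dots,r\}$, it equals $0$ if $I_2\cap K\neq\varnothing$; $-\rho^m$ if $I_2=\varnothing$ and $K\neq\varnothing$; $0$ if $I_2\neq\varnothing$ and $K=\varnothing$; $\rho^{m-1}-\rho^m$ if $I_2\neq\varnothing$, $K\neq\varnothing$ and $I_2\cap K=\varnothing$; $-\rho^{m-1}$ if $I_2=K=\varnothing$. In particular $\widetilde F_{(0,\dots,0)}(\rho,\boldsymbol T)=1-\prod_iT_i$. (2) $\widetilde F_{\boldsymbol\nu}(\rho,\boldsymbol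 T)$ is a polynomial whose partial degree in each $T_i$ is at most $\max_j\nu_j+1$. (3) Let $\rho\geq1$, $\varepsilon>0$ and $\eta_1,\dots,\eta_r$ complex numbers of modulus $1$. Then for every $\boldsymbol\nu$, $$\big|\widetilde F_{\boldsymbol\nu}\big(\rho,(\eta_i\rho^{-1})_i\big)\big|\leq\big(2+\max_i\nu_i-\min_i\nu_i\big)^r\rho^{\min_i\nu_i}.$$ *)

(* Defs.v *)
(* Multivariate formal power series in T_1..T_r with
   coefficients in Z[rho] = {poly int} (rho is the polynomial variable 'X). *)
From mathcomp Require Import all_boot all_order all_algebra.
Set Implicit Arguments. Unset Strict Implicit. Unset Printing Implicit Defensive.
Import Order.TTheory GRing.Theory Num.Theory.
Local Open Scope ring_scope.

Section Series.
Variable r : nat.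

Definition midx := 'I_r -> nat.

Definition mps := midx -> {poly int}.

(* minimum of a family of naturals over 'I_r (the true minimum when r >= 1) *)
Definition nmin (f : 'I_r -> nat) : nat :=
  \big[minn/(\max_(i < r) f i)%N]_(i < r) f i.
Definition nmax (f : 'I_r -> nat) : nat := (\max_(i < r) f i)%N.

(* Cauchy product: (f*g)_n = sum_{m <= n} f_m g_{n-m} ; m ranges over
   multi-indices bounded coordinatewise by n *)
Definition mps_mul (f g : mps) : mps := fun n =>
  \sum_(m : {ffun 'I_r -> 'I_(nmax n).+1} | [forall i, (m i <= n i)%N])
     f (fun i => nat_of_ord (m i)) * g (fun i => (n i - m i)%N).
Definition mps_add (f g : mps) : mps := fun n => f n + g n.
Definition mps_opp (f : mps) : mps := fun n => - f n.
Definition mps_sub (f g : mps) : mps := mps_add f (mps_opp g).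
Definition mps_const (c : {poly int}) : mps :=
  fun n => if [forall i, n i == 0%N] then c else 0.
Definition mps_one : mps := mps_const 1.
Definition mps_rho : mps := mps_const 'X.
Definition mps_T (i : 'I_r) : mps :=
  fun n => if [forall j, n j == (j == i : nat)] then 1 else 0.

Definition F (nu : midx) : mps := fun n => 'X^(nmin (fun i => n i + nu i)).

Definition Ft (nu : midx) : mps :=
  mps_mul (mps_sub mps_one (mps_mul mps_rho (\big[mps_mul/mps_one]_(i < r) mps_T i)))
    (mps_mul (\big[mps_mul/mps_one]_(i < r) mps_sub mps_one (mps_T i)) (F nu)).

Definition one_minus_prodT : mps :=
  mps_sub mps_one (\big[mps_mul/mps_one]_(i < r) mps_T i).

Definition coef_formula (nu n : midx) : {poly int} :=
  let m := nmin (fun i => n i + nu i) in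
  let inI1 i := (1 <= n i)%N in
  let inI2 i := (2 <= n i)%N in
  let inK i := inI1 i && (m.+1 <= n i + nu i)%N in
  let I1_empty := [forall i, ~~ inI1 i] in
  let I1_full := [forall i, inI1 i] in
  let I2_empty := [forall i, ~~ inI2 i] in
  let K_empty := [forall i, ~~ inK i] in
  let I2K_empty := [forall i, ~~ (inI2 i && inK i)] in
  if ~~ I1_full then
    (if I1_empty then 'X^m
     else if K_empty then 'X^m - 'X^(m - 1)
     else 0)
  else
    (if ~~ I2K_empty then 0
     else if I2_empty && ~~ K_empty then - 'X^m
     else if ~~ I2_empty && K_empty then 0
     else if ~~ I2_empty && ~~ K_empty && I2K_empty then 'X^(m - 1) - 'X^m
     else (* I2 = K = empty *) - 'X^(m - 1)).

(* evaluation of a series whose support lies in the box [0,B]^r at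
   T_i := t i, rho := x, in a ring C *)
Definition mps_eval_box (C : comNzRingType) (B : nat) (f : mps) (x : C)
    (t : 'I_r -> C) : C :=
  \sum_(m : {ffun 'I_r -> 'I_B.+1})
     (map_poly (fun z : int => z%:~R) (f (fun i => nat_of_ord (m i)))).[x]
       * \prod_(i < r) t i ^+ m i.

End Series.

(* Main.v *)
Require Import Defs.
From mathcomp Require Import all_boot all_order all_algebra.
From Stdlib Require Import FunctionalExtensionality.
From mathcomp Require Import zify ring.
Set Implicit Arguments. Unset Strict Implicit. Unset Printing Implicit Defensive.
Import Order.TTheory GRing.Theory Num.Theory.
Local Open Scope ring_scope.

Section S.
Variable r : nat.
Implicit Types (n a : midx r) (f g : mps r).

Lemma le_nmax n i : (n i <= nmax n)%N.
Proof. exact: leq_bigmax. Qed.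

Definition pt a (c : {poly int}) : mps r :=
  fun m => if [forall i, m i == a i] then c else 0.

Lemma mps_mul_pt_l a c g n :
  mps_mul (pt a c) g n =
  if [forall i, a i <= n i]%N then c * g (fun i => n i - a i)%N else 0.
Proof.
rewrite /mps_mul /pt; case: ifP => han.
- have hle : forall i, (a i < (nmax n).+1)%N.
    move=> i; rewrite ltnS; apply: leq_trans (le_nmax n i).
    by move/forallP: han.
  pose m0 : {ffun 'I_r -> 'I_(nmax n).+1} := [ffun i => inord (a i)].
  have m0E : forall i, (m0 i : nat) = a i by move=> i; rewrite ffunE inordK.
  rewrite (bigD1 m0) /=; last first.
    by apply/forallP => i; rewrite m0E; move/forallP: han.
  rewrite big1 ?addr0.
    have -> : [forall i, (m0 i : nat) == a i] by apply/forallP => i; rewrite m0E.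
    congr (_ * g _); apply: functional_extensionality => i; by rewrite m0E.
  move=> m /andP [_ hm]; case: ifP; last by rewrite ?mul0r ?mulr0.
  move/forallP => hma.
  exfalso; move/eqP: hm; apply; apply/ffunP => i; apply: val_inj.
  by rewrite /= m0E; apply/eqP.
- rewrite big1 // => m /forallP hm; case: ifP; last by rewrite ?mul0r ?mulr0.
  move/forallP => hma.
  move/negbT: han => /forallPn [i]; rewrite -(eqP (hma i)).
  by rewrite hm.
Qed.

Lemma mps_mul_pt_r a c f n :
  mps_mul f (pt a c) n =
  if [forall i, a i <= n i]%N then f (fun i => n i - a i)%N * c else 0.
Proof.
rewrite /mps_mul /pt; case: ifP => han.
- have hle : forall i, (n i - a i < (nmax n).+1)%N.
    move=> i; rewrite ltnS; apply: leq_trans (le_nmax n i); exact: leq_subr.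
  pose m0 : {ffun 'I_r -> 'I_(nmax n).+1} := [ffun i => inord (n i - a i)].
  have m0E : forall i, (m0 i : nat) = (n i - a i)%N by move=> i; rewrite ffunE inordK.
  rewrite (bigD1 m0) /=; last first.
    by apply/forallP => i; rewrite m0E leq_subr.
  rewrite (@big1 _ _ _ _ _ _ _ (fun i : {ffun 'I_r -> 'I_(nmax n).+1} => _)) ?addr0.
    have -> : [forall i, (n i - m0 i)%N == a i].
      apply/forallP => i; rewrite m0E subKn //; by move/forallP: han.
    congr (f _ * _); apply: functional_extensionality => i; by rewrite m0E.
  move=> m /andP [hmn hm]; case: ifP; last by rewrite ?mul0r ?mulr0.
  move/forallP => hma.
  exfalso; move/eqP: hm; apply; apply/ffunP => i; apply: val_inj.
  rewrite /= m0E -(eqP (hma i)) subKn //; by move/forallP: hmn.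
- rewrite big1 // => m /forallP hm; case: ifP; last by rewrite ?mul0r ?mulr0.
  move/forallP => hma.
  move/negbT: han => /forallPn [i]; rewrite -(eqP (hma i)).
  by rewrite leq_subr.
Qed.

Lemma mps_mulDl f1 f2 g n :
  mps_mul (mps_add f1 f2) g n = mps_mul f1 g n + mps_mul f2 g n.
Proof. by rewrite /mps_mul -big_split; apply: eq_bigr => m _; rewrite mulrDl. Qed.


Lemma forall_prod (R : comNzRingType) (P : 'I_r -> bool) :
  (if [forall j, P j] then 1 else 0 : R) = \prod_j (if P j then 1 else 0).
Proof.
case: ifP => [/forallP hP | /negbT /forallPn [j hj]].
  by rewrite big1 // => j _; rewrite hP.
by rewrite (bigD1 j) //= (negbTE hj) mul0r.
Qed.

Lemma mps_T_pt x : mps_T x = pt (fun j : 'I_r => (j == x : nat)) 1.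
Proof. by []. Qed.

Lemma mps_one_prod : @mps_one r = fun m => \prod_j (if m j == 0%N then 1 else 0).
Proof.
apply: functional_extensionality => m; rewrite /mps_one /mps_const.
exact: (@forall_prod _ (fun j => m j == 0%N)).
Qed.

Lemma prodT_seq (s : seq 'I_r) : uniq s ->
  \big[@mps_mul r/@mps_one r]_(i <- s) mps_T i =
  fun m => \prod_j (if m j == (j \in s : nat) then 1 else 0).
Proof.
elim: s => [|x s IH] /=.
  by rewrite big_nil mps_one_prod.
move=> /andP [xs us]; rewrite big_cons IH //.
apply: functional_extensionality => n.
rewrite mps_T_pt mps_mul_pt_l.
rewrite [RHS](bigD1 x) //= in_cons eqxx /=.
case: ifP => [/forallP hf | /negbT /forallPn [i hi]].
- rewrite mul1r (bigD1 x) //= eqxx (negbTE xs).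
  have h1 := hf x; rewrite eqxx /= in h1.
  have -> : (n x - 1 == 0)%N = (n x == 1)%N.
    by case: (n x) h1 => [|[|k]].
  congr (_ * _); apply: eq_bigr => j hj.
  by rewrite (negbTE hj) subn0 in_cons (negbTE hj).
- have hix : i = x.
    apply/eqP; move: hi; case: (i == x) => //=.
  subst i; move: hi; rewrite eqxx /= -ltnNge ltnS leqn0 => /eqP ->.
  by rewrite /= mul0r.
Qed.

Lemma prodT_eq : \big[@mps_mul r/@mps_one r]_(i < r) mps_T i =
  fun m => \prod_j (if m j == 1%N then 1 else 0).
Proof.
rewrite prodT_seq ?index_enum_uniq //.
apply: functional_extensionality => m; apply: eq_bigr => j _.
by rewrite mem_index_enum.
Qed.


Definition qv (t : nat) : {poly int} :=
  if t == 0%N then 1 else if t == 1%N then -1 else 0.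

Lemma mps_mulBl_T x g n :
  mps_mul (mps_sub (@mps_one r) (mps_T x)) g n =
  g n - (if (1 <= n x)%N then g (fun i => n i - (i == x : nat))%N else 0).
Proof.
have -> : mps_sub (@mps_one r) (mps_T x) =
   mps_add (pt (fun _ => 0%N) 1) (pt (fun j : 'I_r => (j == x : nat)) (-1)).
  apply: functional_extensionality => m.
  rewrite /mps_sub /mps_add /mps_opp /pt /mps_one /mps_const /mps_T.
  by case: ifP => _; case: ifP => _; rewrite ?subr0 ?addr0.
rewrite mps_mulDl !mps_mul_pt_l.
have -> : [forall i, (0 <= n i)%N] by apply/forallP.
rewrite mul1r.
have -> : (fun i => n i - 0)%N = n by apply: functional_extensionality => i; rewrite subn0.
case: ifP => [/forallP hf | /negbT /forallPn [i hi]].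
  have := hf x; rewrite eqxx => -> ; by rewrite mulN1r.
have hix : i = x by apply/eqP; move: hi; case: (i == x).
subst i; move: hi; rewrite eqxx /= => /negbTE ->; by rewrite subr0 addr0.
Qed.

Lemma prodQ_seq (s : seq 'I_r) : uniq s ->
  \big[@mps_mul r/@mps_one r]_(i <- s) mps_sub (@mps_one r) (mps_T i) =
  fun m => \prod_j (if j \in s then qv (m j) else if m j == 0%N then 1 else 0).
Proof.
elim: s => [|x s IH] /=.
  by rewrite big_nil mps_one_prod.
move=> /andP [xs us]; rewrite big_cons.
apply: functional_extensionality => n.
rewrite mps_mulBl_T IH //.
rewrite [RHS](bigD1 x) //= in_cons eqxx /=.
rewrite (bigD1 x) //= (negbTE xs).
have E : forall m : midx r, (forall j, j != x -> m j = n j) ->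
  \prod_(j | j != x) (if j \in s then qv (m j) else (if m j == 0%N then 1 else 0)) =
  \prod_(j | j != x) (if j \in x :: s then qv (n j) else (if n j == 0%N then 1 else 0)).
  move=> m hm; apply: eq_bigr => j hj; by rewrite hm // in_cons (negbTE hj).
rewrite E //.
have [hx|hx] := posnP (n x).
  by rewrite hx /= subr0 /qv.
rewrite [X in _ - X](bigD1 x) //= (negbTE xs) E; last first.
  by move=> j hj; rewrite (negbTE hj) subn0.
rewrite eqxx /= mul0r sub0r -mulNr; congr (_ * _).
by case: (n x) hx => [|[|k]] //= _; rewrite /qv /= ?oppr0.
Qed.

Lemma prodQ_eq : \big[@mps_mul r/@mps_one r]_(i < r) mps_sub (@mps_one r) (mps_T i) =
  fun m => \prod_j qv (m j).
Proof.
rewrite prodQ_seq ?index_enum_uniq //.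
apply: functional_extensionality => m; apply: eq_bigr => j _.
by rewrite mem_index_enum.
Qed.


Lemma bigmin_seq_le (f : 'I_r -> nat) d (s : seq 'I_r) i :
  i \in s -> (\big[minn/d]_(j <- s) f j <= f i)%N.
Proof.
elim: s => [//|x s IH]; rewrite in_cons big_cons => /orP [/eqP ->|his].
  exact: geq_minl.
apply: leq_trans (geq_minr _ _) (IH his).
Qed.

Lemma bigmin_seq_ex (f : 'I_r -> nat) d (s : seq 'I_r) :
  \big[minn/d]_(j <- s) f j = d \/ exists2 j, j \in s & \big[minn/d]_(j <- s) f j = f j.
Proof.
elim: s => [|x s IH]; first by left; rewrite big_nil.
rewrite big_cons; case: (leqP (f x) (\big[minn/d]_(j <- s) f j)) => h.
  right; exists x; first by rewrite in_cons eqxx.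
  by [].
case: IH => [->|[j hj ->]]; [by left | right; exists j => //].
by rewrite in_cons hj orbT.
Qed.

Lemma nmin_le (f : 'I_r -> nat) i : (nmin f <= f i)%N.
Proof. by apply: bigmin_seq_le; rewrite mem_index_enum. Qed.

Lemma nmin_ex (hr : (1 <= r)%N) (f : 'I_r -> nat) : exists i, nmin f = f i.
Proof.
rewrite /nmin; case: (bigmin_seq_ex f (\max_(i < r) f i) (index_enum 'I_r)) => [->|[j _ ->]].
  have h0 : (0 < #|'I_r|)%N by rewrite card_ord.
  have [i0 ->] := @bigop.eq_bigmax _ f h0.
  by exists i0.
by exists j.
Qed.

Lemma nmin_eq (hr : (1 <= r)%N) (f : 'I_r -> nat) v :
  (forall i, v <= f i)%N -> (exists i, f i = v) -> nmin f = v.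
Proof.
move=> hv [i hi]; have [j hj] := nmin_ex hr f.
by apply/eqP; rewrite eqn_leq; apply/andP; split; [rewrite -hi; exact: nmin_le | rewrite hj; exact: hv].
Qed.


Definition mmv (nu n : midx r) := nmin (fun i => n i + nu i).
Definition inK (nu n : midx r) i := (1 <= n i)%N && ((mmv nu n).+1 <= n i + nu i)%N.
Definition Gf (nu n : midx r) : {poly int} :=
  (if [forall i, ~~ inK nu n i] then 'X^(mmv nu n) else 0)
  + (if [forall i, ~~ (1 <= n i)%N] then 'X^(mmv nu n - 1) else 0)
  - (if [forall i, ~~ inK nu n i] then 'X^(mmv nu n - 1) else 0).

Lemma sum_small N (g : nat -> {poly int}) :
  (forall t, (2 <= t)%N -> g t = 0) -> (N = 0%N -> g 1%N = 0) ->
  \sum_(t < N.+1) g t = g 0%N + g 1%N.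
Proof.
move=> h2 h1; rewrite big_ord_recl /=; case: N h1 => [|N] h1.
  by rewrite big_ord0 h1 // addr0.
rewrite big_ord_recl big1 ?addr0 //= => i _; apply: h2.
by rewrite /bump /=.
Qed.

Lemma term_eq (hr : (1 <= r)%N) (nu n : midx r) (m : 'I_r -> nat) :
  (forall i, m i <= n i)%N ->
  let mm := mmv nu n in
  (\prod_j qv (m j)) * 'X^(nmin (fun i => (n i - m i) + nu i)%N) =
  (\prod_j qv (m j)) * ('X^(mm - 1) +
     (if [forall j, (m j == 1%N) ==> (mm.+1 <= n j + nu j)%N] then 1 else 0)
       * ('X^mm - 'X^(mm - 1))).
Proof.
move=> hmn mm.
case: (boolP [forall j, (m j <= 1)%N]) => [/forallP h1|/forallPn [j hj]]; last first.
  rewrite (bigD1 j) //= /qv.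
  have -> : (m j == 0%N) = false by apply/negbTE; move: hj; case: (m j).
  have -> : (m j == 1%N) = false by apply/negbTE; move: hj; case: (m j) => [|[]].
  by rewrite !mul0r.
congr (_ * _).
have hle := fun i => nmin_le (fun i => n i + nu i) i.
have [j0 hj0] := nmin_ex hr (fun i => n i + nu i).
rewrite -/(mmv nu n) -/mm /= in hle hj0.
case: ifP => [/forallP hK | /negbT /forallPn [j /negP hj]].
  rewrite mul1r addrC subrK; congr ('X^ _).
  apply: nmin_eq => // [i|].
    have := hK i; have := hle i; have := h1 i; have := hmn i.
    case: (m i) => [|[|k]] /=; lia.
  exists j0; have := hK j0; have := h1 j0; rewrite hj0.
  case: (m j0) => [|[|k]] /=; lia.
rewrite mul0r addr0; congr ('X^ _).
have hj1 : m j = 1%N by move: hj; case: (m j) => [|[|k]] //= _; have := h1 j; case: (m j) => [|[|]].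
apply: nmin_eq => // [i|].
  have := hle i; have := hmn i; have := h1 i; lia.
exists j; move: hj; rewrite hj1 eqxx /=.
have := hle j; have := hmn j; rewrite hj1; lia.
Qed.


Lemma ifprod (P : 'I_r -> bool) (A : {poly int}) :
  (if [forall j, P j] then A else 0) = \prod_j (if P j then 1 else 0) * A.
Proof. by rewrite -forall_prod; case: ifP; rewrite ?mul1r ?mul0r. Qed.

Lemma H_eq (hr : (1 <= r)%N) (nu n : midx r) :
  mps_mul (fun m => \prod_j qv (m j)) (F nu) n = Gf nu n.
Proof.
rewrite /mps_mul /F.
set N := nmax n.
set mm := mmv nu n.
set c := fun (m : {ffun 'I_r -> 'I_N.+1}) =>
  (if [forall j, ((m j : nat) == 1%N) ==> (mm.+1 <= n j + nu j)%N] then 1 else 0 : {poly int}).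
rewrite (eq_bigr (fun m : {ffun 'I_r -> 'I_N.+1} => (\prod_j qv (m j)) * 'X^(mm - 1) +
     (\prod_j qv (m j)) * c m * ('X^mm - 'X^(mm - 1)))); last first.
  move=> m /forallP hm; rewrite (term_eq hr nu hm) mulrDr mulrA.
  by [].
rewrite big_split /= -!mulr_suml.
rewrite big_mkcond [X in _ + X * _]big_mkcond /=.
rewrite [X in X * _ + _](eq_bigr (fun i : {ffun 'I_r -> 'I_N.+1} =>
   \prod_j ((if (i j <= n j)%N then 1 else 0) * qv (i j)))); last first.
  move=> i _; rewrite big_split /= -forall_prod; by case: ifP => _; rewrite ?mul1r ?mul0r.
rewrite [X in _ + X * _](eq_bigr (fun i : {ffun 'I_r -> 'I_N.+1} =>
   \prod_j ((if (i j <= n j)%N then 1 else 0) * (qv (i j) *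
     (if ((i j : nat) == 1%N) ==> (mm.+1 <= n j + nu j)%N then 1 else 0))))); last first.
  move=> i _; rewrite big_split /= big_split /= -!forall_prod /c.
  by case: ifP => _; case: ifP => _; rewrite ?mul1r ?mul0r ?mulr1 ?mulr0.
rewrite -(bigA_distr_bigA (fun j (t : 'I_N.+1) => (if (t <= n j)%N then 1 else 0) * qv t)).
rewrite -(bigA_distr_bigA (fun j (t : 'I_N.+1) => (if (t <= n j)%N then 1 else 0) * (qv t *
     (if ((t : nat) == 1%N) ==> (mm.+1 <= n j + nu j)%N then 1 else 0)))).
have hN : forall j, (n j <= N)%N by move=> j; exact: le_nmax.
have e1 : forall i, \sum_(t < N.+1) (if (t <= n i)%N then 1 else 0) * qv t
    = if ~~ (0 < n i)%N then 1 else 0 :> {poly int}.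
  move=> i; rewrite (@sum_small N (fun t => (if (t <= n i)%N then 1 else 0) * qv t)).
  - by rewrite /qv /=; case: (n i) => [|k] /=; rewrite ?mulr1 ?mul1r ?mul0r ?addr0 ?subrr.
  - by move=> [|[|t]] // _; rewrite /qv /= mulr0.
  - move=> N0; have := hN i; rewrite N0 leqn0 => /eqP ->; by rewrite mul0r.
have e2 : forall i, \sum_(t < N.+1) ((if (t <= n i)%N then 1 else 0) * (qv t *
     (if ((t : nat) == 1%N) ==> (mm.+1 <= n i + nu i)%N then 1 else 0)))
    = if ~~ inK nu n i then 1 else 0 :> {poly int}.
  move=> i; rewrite (@sum_small N (fun t : nat => (if (t <= n i)%N then 1 else 0) * (qv t *
     (if (t == 1%N) ==> (mm.+1 <= n i + nu i)%N then 1 else 0)))).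
  - rewrite /qv /inK -/mm /=.
    case: (n i) => [|k] /=; case: (mm < _)%N; rewrite /= ?mulr1 ?mul1r ?mul0r ?mulr0 ?addr0 ?subrr //.
  - by move=> [|[|t]] // _; rewrite /qv /= mul0r mulr0.
  - move=> N0; have := hN i; rewrite N0 leqn0 => /eqP ->; by rewrite mul0r.
rewrite (eq_bigr _ (fun i _ => e1 i)) (eq_bigr _ (fun i _ => e2 i)) -!forall_prod /Gf -/mm.
case: ifP => _; case: ifP => _; rewrite ?mul1r ?mul0r ?addr0 ?add0r ?subr0 ?sub0r ?oppr0 //.
by rewrite addrC subrK addrK.
Qed.


Lemma sub0_fun (n : midx r) : (fun i => n i - 0)%N = n.
Proof. by apply: functional_extensionality => i; rewrite subn0. Qed.

Lemma Ft_eq (hr : (1 <= r)%N) (nu n : midx r) :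
  Ft nu n = Gf nu n -
    (if [forall i, (1 <= n i)%N] then 'X * Gf nu (fun i => n i - 1)%N else 0).
Proof.
rewrite /Ft prodQ_eq prodT_eq.
have -> : mps_sub (@mps_one r) (mps_mul (@mps_rho r)
              (fun m => \prod_j (if m j == 1%N then 1 else 0))) =
          mps_add (pt (fun _ => 0%N) 1) (pt (fun _ => 1%N) (- 'X)).
  apply: functional_extensionality => m.
  have -> : @mps_rho r = pt (fun _ => 0%N) 'X by [].
  rewrite /mps_sub /mps_add /mps_opp mps_mul_pt_l.
  have -> : [forall i, (0 <= m i)%N] by apply/forallP.
  under eq_bigr do rewrite subn0.
  rewrite /pt /mps_one /mps_const.
  congr (_ + _).
  rewrite -(@forall_prod _ (fun j => m j == 1%N)).
  by case: ifP; rewrite ?mulr1 ?mulr0 ?oppr0.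
rewrite mps_mulDl !mps_mul_pt_l.
have -> : [forall i, (0 <= n i)%N] by apply/forallP.
rewrite sub0_fun mul1r !H_eq //.
case: ifP => _; last by rewrite subr0 addr0.
by rewrite mulNr.
Qed.


Lemma XmulX k : (0 < k)%N -> 'X * 'X^(k - 1) = 'X^k :> {poly int}.
Proof. by move=> hk; rewrite -exprS subn1 prednK. Qed.

Lemma part1 (hr : (1 <= r)%N) (nu n : midx r) : Ft nu n = coef_formula nu n.
Proof.
rewrite Ft_eq // /coef_formula /Gf /inK /mmv /=.
set mm := nmin (fun i => n i + nu i).
have hle : forall i, (mm <= n i + nu i)%N := fun i => nmin_le (fun i => n i + nu i) i.
have [j0 hj0] := nmin_ex hr (fun i => n i + nu i).
rewrite -/mm /= in hj0.
case: (boolP [forall i, (0 < n i)%N]) => hfull /=.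
- move/forallP: hfull => hf.
  have hm1 : (0 < mm)%N by have := hf j0; rewrite hj0; lia.
  have -> : nmin (fun i => (n i - 1)%N + nu i) = (mm - 1)%N.
    apply: nmin_eq => // [i|]; first by have := hle i; have := hf i; lia.
    by exists j0; have := hf j0; lia.
  have -> : [forall i, ~~ (0 < n i - 1)%N] = [forall i, ~~ (1 < n i)%N].
    by apply: eq_forallb => i; have := hf i; lia.
  have -> : [forall i, ~~ ((0 < n i - 1)%N && (mm - 1 < n i - 1 + nu i)%N)]
      = [forall i, ~~ ((1 < n i)%N && ((0 < n i)%N && (mm < n i + nu i)%N))].
    by apply: eq_forallb => i; have := hf i; lia.
  have -> : [forall i, ~~ (0 < n i)%N] = false.
    by apply/negbTE/forallPn; exists (Ordinal hr); rewrite negbK.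
  set I2K := [forall i, ~~ ((1 < n i)%N && ((0 < n i)%N && (mm < n i + nu i)%N))].
  set I2 := [forall i, ~~ (1 < n i)%N].
  set K := [forall i, ~~ ((0 < n i)%N && (mm < n i + nu i)%N)].
  have h2K : I2 -> I2K.
    by move/forallP => h; apply/forallP => i; rewrite (negbTE (h i)).
  have hK2K : ~~ I2K -> ~~ K.
    move/forallPn => [i /negPn /andP [_ hi]]; apply/forallPn; exists i.
    by rewrite hi.
  have hm2 : I2K -> ~~ I2 -> (1 < mm)%N.
    move=> /forallP h /forallPn [i /negPn hi]; have := h i; rewrite hi /=.
    have := hle i; lia.
  case: (boolP I2K) => hI2K; last first.
    by rewrite (negbTE (hK2K hI2K)) (negbTE (contra h2K hI2K)) /= !(addr0, subr0, mulr0, oppr0).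
  case: (boolP I2) => hI2 /=.
  + rewrite addrK XmulX //.
    by case: (boolP K) => hK /=; ring.
  + have h2 := hm2 hI2K hI2.
    rewrite !addr0 mulrBr (XmulX hm1) (@XmulX (mm - 1)); last by lia.
    by case: (boolP K) => hK /=; ring.
- rewrite subr0.
  set I1 := [forall i, ~~ (0 < n i)%N].
  set K := [forall i, ~~ ((0 < n i)%N && (mm < n i + nu i)%N)].
  have hIK : I1 -> K.
    by move/forallP => h; apply/forallP => i; rewrite (negbTE (h i)).
  case: (boolP I1) => hI1.
    by rewrite (hIK hI1) /=; ring.
  by case: (boolP K) => hK /=; ring.
Qed.


Lemma part1b (hr : (1 <= r)%N) (n : midx r) :
  Ft (fun _ => 0%N) n = @one_minus_prodT r n.
Proof.
rewrite part1 // /coef_formula /one_minus_prodT /mps_sub /mps_add /mps_opp prodT_eq.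
rewrite /mps_one /mps_const -(@forall_prod _ (fun j => n j == 1%N)) /=.
set mm := nmin _.
have hle : forall i, (mm <= n i + 0)%N := fun i => nmin_le _ i.
have [j0 hj0] := nmin_ex hr (fun i => n i + 0)%N.
rewrite -/mm /= in hj0.
case: (boolP [forall i, (0 < n i)%N]) => hfull /=.
- move/forallP: hfull => hf.
  have hm1 : (0 < mm)%N by have := hf j0; rewrite hj0; lia.
  have -> : [forall i, n i == 0%N] = false.
    by apply/negbTE/forallPn; exists j0; have := hf j0; lia.
  case: (boolP [forall i, ~~ ((1 < n i)%N && ((0 < n i)%N && (mm < n i + 0)%N))]) => hI2K /=; last first.
    move/forallPn: hI2K => [i /negPn /andP [hi _]].
    have -> : [forall i, n i == 1%N] = false.
      by apply/negbTE/forallPn; exists i; lia.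
    by rewrite subrr.
  move/forallP: hI2K => hI2K.
  case: (boolP [forall i, ~~ (1 < n i)%N]) => hI2 /=.
    move/forallP: hI2 => hI2.
    have h1 : forall i, n i = 1%N by move=> i; have := hI2 i; have := hf i; lia.
    have hmm : mm = 1%N by have := h1 j0; rewrite hj0; lia.
    have -> : [forall i, n i == 1%N] by apply/forallP => i; rewrite h1.
    have -> : [forall i, ~~ ((0 < n i)%N && (mm < n i + 0)%N)].
      by apply/forallP => i; rewrite h1 hmm.
    by rewrite /= hmm sub0r.
  move/forallPn: hI2 => [i2 /negPn hi2].
  have -> : [forall i, n i == 1%N] = false.
    by apply/negbTE/forallPn; exists i2; lia.
  case: (boolP [forall i, ~~ ((0 < n i)%N && (mm < n i + 0)%N)]) => hK /=.
    by rewrite subrr.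
  exfalso; move/forallPn: hK => [k /negPn /andP [hk1 hk2]].
  have := hI2K k; rewrite hk1 hk2 /= andbT; lia.
- move/forallPn: hfull => [j hj].
  have hnj : n j = 0%N by lia.
  have hmm : mm = 0%N by have := hle j; rewrite hnj; lia.
  have -> : [forall i, n i == 1%N] = false.
    by apply/negbTE/forallPn; exists j; rewrite hnj.
  rewrite subr0.
  have -> : [forall i, n i == 0%N] = [forall i, ~~ (0 < n i)%N].
    by apply: eq_forallb => i; lia.
  case: ifP => hI1; first by rewrite hmm.
  have -> : [forall i, ~~ ((0 < n i)%N && (mm < n i + 0)%N)] = false.
    move/negbT/forallPn: hI1 => [i /negPn hi].
    by apply/negbTE/forallPn; exists i; rewrite negbK hi hmm /=; lia.
  by [].
Qed.


Lemma coef_zero (hr : (1 <= r)%N) (nu n : midx r) i :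
  (2 + nmax nu - nmin nu <= n i)%N -> coef_formula nu n = 0.
Proof.
move=> hi.
have hmu : (nmin nu <= nu i)%N := nmin_le nu i.
have hM : forall j, (nu j <= nmax nu)%N := fun j => le_nmax nu j.
have hMi := hM i.
rewrite /coef_formula /=.
set mm := nmin _.
have hle : forall i, (mm <= n i + nu i)%N := fun i => nmin_le _ i.
case: (boolP [forall i, (0 < n i)%N]) => hfull /=.
- move/forallP: hfull => hf.
  case: (boolP [forall i, ~~ ((1 < n i)%N && ((0 < n i)%N && (mm < n i + nu i)%N))]) => hI2K //=.
  move/forallP: hI2K => hI2K.
  have hmi : (nmax nu + 2 <= mm)%N.
    have := hI2K i; have := hle i; lia.
  have -> : [forall i, ~~ (1 < n i)%N] = false.
    by apply/negbTE/forallPn; exists i; lia.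
  have -> : [forall i, ~~ ((0 < n i)%N && (mm < n i + nu i)%N)].
    apply/forallP => k; have := hI2K k; have := hf k; have := hM k; lia.
  by [].
- move/forallPn: hfull => [j hj].
  have hmm : (mm <= nmax nu)%N by have := hle j; have := hM j; lia.
  have -> : [forall i, ~~ (0 < n i)%N] = false.
    by apply/negbTE/forallPn; exists i; lia.
  have -> : [forall i, ~~ ((0 < n i)%N && (mm < n i + nu i)%N)] = false.
    by apply/negbTE/forallPn; exists i; lia.
  by [].
Qed.


Section Ev.
Variable C : numClosedFieldType.
Variable rho : C.
Definition ev (p : {poly int}) := (map_poly (fun z : int => z%:~R) p).[rho].
Lemma evB p q : ev (p - q) = ev p - ev q.
Proof. by rewrite /ev rmorphB hornerD hornerN. Qed.
Lemma evN p : ev (- p) = - ev p.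
Proof. by rewrite /ev rmorphN hornerN. Qed.
Lemma ev0 : ev 0 = 0.
Proof. by rewrite /ev rmorph0 horner0. Qed.
Lemma evX k : ev 'X^k = rho ^+ k.
Proof. by rewrite /ev map_polyXn hornerXn. Qed.
End Ev.

Lemma cbound (C : numClosedFieldType) (rho : C) (nu n : midx r) :
  1 <= rho ->
  `|(map_poly (fun z : int => z%:~R) (coef_formula nu n)).[rho]|
    <= rho ^+ nmin (fun i => n i + nu i).
Proof.
move=> hr1.
have h0 : forall k, 0 <= rho ^+ k.
  by move=> k; apply: exprn_ge0; apply: le_trans hr1.
have hle : forall k, rho ^+ (k - 1) <= rho ^+ k.
  by move=> k; apply: ler_weXn2l => //; exact: leq_subr.
have hd : forall k, `|rho ^+ k - rho ^+ (k - 1)| <= rho ^+ k.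
  by move=> k; rewrite ger0_norm ?subr_ge0 // gerBl.
change (`|ev rho (coef_formula nu n)| <= rho ^+ nmin (fun i => n i + nu i)).
rewrite /coef_formula /=.
set mm := nmin _.
repeat case: ifP => _;
  rewrite ?evB ?evN ?ev0 ?evX ?normrN ?normr0 ?(ger0_norm (h0 _)) //;
  by rewrite distrC.
Qed.


Lemma sum_le_cnt (C : numClosedFieldType) (K D : nat) :
  \sum_(t < K) (if (t <= D)%N then 1 else 0 : C) = (minn K D.+1)%:R.
Proof.
elim: K => [|K IH]; first by rewrite big_ord0 min0n.
rewrite big_ord_recr /= IH.
case: (leqP K D) => h.
  have -> : minn K.+1 D.+1 = (minn K D.+1).+1 by lia.
  by rewrite -natr1.
have -> : minn K.+1 D.+1 = minn K D.+1 by lia.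
by rewrite addr0.
Qed.

Lemma part3 (hr : (1 <= r)%N) (C : numClosedFieldType) (rho : C) (eta : 'I_r -> C)
  (nu : midx r) (B : nat) :
  1 <= rho -> (forall i, `|eta i| = 1) ->
  `| mps_eval_box B (Ft nu) rho (fun i => eta i / rho) |
     <= (2 + nmax nu - nmin nu)%N%:R ^+ r * rho ^+ nmin nu.
Proof.
move=> hr1 heta.
have rho0 : 0 <= rho by apply: le_trans hr1.
have rhon0 : rho != 0 by apply: lt0r_neq0; apply: lt_le_trans hr1.
have h0 : forall k, 0 <= rho ^+ k by move=> k; exact: exprn_ge0.
pose i0 := Ordinal hr.
have hmuM : (nmin nu <= nmax nu)%N.
  exact: leq_trans (nmin_le nu i0) (le_nmax nu i0).
set D := (1 + nmax nu - nmin nu)%N.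
have hD : (2 + nmax nu - nmin nu)%N = D.+1 by rewrite /D; lia.
have [j0 hj0] := nmin_ex hr nu.
have hterm : forall m : {ffun 'I_r -> 'I_B.+1},
   `|ev rho (Ft nu (fun i => m i)) * \prod_i (eta i / rho) ^+ m i|
     <= (if [forall i, (m i <= D)%N] then 1 else 0) * rho ^+ nmin nu.
  move=> m; rewrite part1 // normrM normr_prod.
  have -> : \prod_i `|(eta i / rho) ^+ m i| = \prod_i (rho^-1) ^+ m i.
    apply: eq_bigr => i _; by rewrite normrX normf_div heta ger0_norm // div1r.
  case: ifP => hm; last first.
    move/negbT/forallPn: hm => [i hi].
    rewrite (@coef_zero hr nu (fun i => m i) i); last by rewrite hD; lia.
    by rewrite ev0 normr0 !mul0r.
  rewrite mul1r.
  have hP : 0 <= \prod_i rho^-1 ^+ m i.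
    by apply: prodr_ge0 => i _; apply: exprn_ge0; rewrite invr_ge0.
  have hc : `|ev rho (coef_formula nu (fun i => m i))| <= rho ^+ nmin (fun i => (m i : nat) + nu i)
    := @cbound C rho nu (fun i => m i) hr1.
  apply: le_trans (ler_wpM2r hP hc) _.
  have hc2 : rho ^+ nmin (fun i => (m i : nat) + nu i) <= rho ^+ (nmin nu + \sum_i m i).
    apply: ler_weXn2l => //.
    have := nmin_le (fun i => (m i : nat) + nu i) j0.
    have : (m j0 <= \sum_i m i)%N by rewrite (bigD1 j0) //= leq_addr.
    rewrite hj0; lia.
  apply: le_trans (ler_wpM2r hP hc2) _.
  rewrite exprD -prodrXr -mulrA -big_split /=.
  rewrite big1 ?mulr1 // => i _.
  by rewrite -exprMn mulfV // expr1n.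
rewrite /mps_eval_box.
apply: le_trans (ler_norm_sum _ _ _) _.
apply: (@le_trans _ _ (\sum_(m : {ffun 'I_r -> 'I_B.+1})
   (if [forall i, (m i <= D)%N] then 1 else 0) * rho ^+ nmin nu)).
  by apply: ler_sum => m _; exact: hterm.
rewrite -mulr_suml hD ler_wpM2r //.
under eq_bigr do rewrite (@forall_prod C (fun i => (_ <= D)%N)).
rewrite -(bigA_distr_bigA (fun i (t : 'I_B.+1) => if (t <= D)%N then 1 else 0 : C)).
have -> : (D.+1%:R : C) ^+ r = \prod_(i < r) (D.+1%:R : C) by rewrite prodr_const card_ord.
apply: ler_prod => i _; rewrite sum_le_cnt ler0n /= ler_nat.
exact: geq_minr.
Qed.

End S.

Unset Implicit Arguments.

Theorem proposition3p2 (r : nat) (hr : (1 <= r)%N) :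
  (* (1) coefficients of Ftilde_nu *)
  (forall (nu n : midx r), Ft nu n = coef_formula nu n)
  /\ (forall n : midx r, Ft (fun _ => 0%N) n = @one_minus_prodT r n)
  (* (2) Ftilde_nu is a polynomial of partial degree <= max nu + 1 in each T_i *)
  /\ (forall (nu n : midx r) (i : 'I_r), ((nmax nu).+1 < n i)%N -> Ft nu n = 0)
  (* (3) the bound at T_i = eta_i / rho *)
  /\ (forall (C : numClosedFieldType) (rho eps : C) (eta : 'I_r -> C),
        1 <= rho -> 0 < eps -> (forall i, `|eta i| = 1) ->
        forall (nu : midx r) (B : nat),
          (forall (n : midx r) (i : 'I_r), (B < n i)%N -> Ft nu n = 0) ->
          `| mps_eval_box B (Ft nu) rho (fun i => eta i / rho) |
            <= (2 + nmax nu - nmin nu)%N%:R ^+ r * rho ^+ nmin nu).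
Proof.
split; first by move=> nu n; exact: part1.
split; first by move=> n; exact: part1b.
split.
  move=> nu n i hi; rewrite part1 //; apply: (coef_zero hr (i := i)); lia.
move=> C rho eps eta hr1 _ heta nu B _.
exact: part3.
Qed.
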